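(* Let $d\in\mathbb{N}_0$, $\boldsymbol{c}=(c_1,\ldots,c_d)\in(\mathbb{N}\setminus\{2\})^d$ with $c_1\ge3$ (if $d\ge1$), and $\boldsymbol{z}=(z_0,\ldots,z_d)\in\mathbb{C}^{d+1}$ with $|z_j|<1$. Then $\lim_{n\to\infty}G_n(\boldsymbol{c};\boldsymbol{z})=G(\boldsymbol{c};\boldsymbol{z})$, and the convergence is uniform on every closed region $|z_0|\le u_0<1,\ldots,|z_d|\le u_d<1$.
   Context: $t^{\star}_n(\boldsymbol{s})=\sum_{n\geq k_1\geq\cdots\geq k_r\geq1}\prod_{j}(2k_j-1)^{-s_j}$ and $t^{\star}(\boldsymbol{s})=\sum_{k_1\geq\cdots\geq k_r\geq1}\prod_{j}(2k_j-1)^{-s_j}$ (for $s_1>1$), both equal to $1$ on the empty index. $\{2\}^a$ is $2$ repeated $a$ times. $G_n(\boldsymbol{c};\boldsymbol{z})=\sum_{a_0,\ldots,a_d\geq0}t^{\star}_n(\{2\}^{a_0},c_1,\ldots,c_d,\{2\}^{a_d})z_0^{2a_0}\cdots z_d^{2a_d}$ and $G(\boldsymbol{c};\boldsymbol{z})$ is the same with $t^\star$ in place of $t^\star_n$. *)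

(* Defs.v *)
From HB Require Import structures.
From mathcomp Require Import all_boot all_order all_algebra.
From mathcomp Require Import complex.
From mathcomp Require Import all_classical all_reals all_analysis.
Set Implicit Arguments. Unset Strict Implicit. Unset Printing Implicit Defensive.
Import Order.TTheory GRing.Theory Num.Theory.
Import numFieldNormedType.Exports.
Local Open Scope ring_scope.
Local Open Scope complex_scope.
Local Open Scope classical_set_scope.

Notation Cx R := (R[i])^o.

(* t*_n(s) = sum_{n >= k_1 >= ... >= k_r >= 1} prod_j (2 k_j - 1)^(-s_j),
   written recursively on the index s:
   t*_n(s_1 :: s') = sum_{k_1 = 1}^{n} (2 k_1 - 1)^(-s_1) t*_{k_1}(s'),
   and t*_n(empty) = 1. *)
Fixpoint tstarn (F : numFieldType) (n : nat) (s : seq nat) : F :=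
  match s with
  | [::] => 1
  | s1 :: s' =>
      \sum_(1 <= k < n.+1) ((2 * k - 1)%:R ^- s1) * tstarn F k s'
  end.

Definition tstar (R : realType) (s : seq nat) : Cx R :=
  lim ((tstarn R[i] n s : Cx R) @[n --> \oo]).

(* The index ({2}^{a_0}, c_1, {2}^{a_1}, ..., c_d, {2}^{a_d});
   c_{j+1} is  c j  for j : 'I_d, a_j is  a j  for j : 'I_d.+1. *)
Definition Gindex (d : nat) (c : 'I_d -> nat) (a : 'I_d.+1 -> nat) : seq nat :=
  nseq (a ord0) 2%N ++
  flatten [seq c j :: nseq (a (lift ord0 j)) 2%N | j <- enum 'I_d].

Definition zmono (R : realType) (d : nat) (z : 'I_d.+1 -> Cx R)
  (a : 'I_d.+1 -> nat) : Cx R :=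
  \prod_(j < d.+1) z j ^+ (2 * a j).

(* Sum over a_0,...,a_d >= 0 of the (d+1)-fold series, defined as the limit of
   the partial sums over the boxes 0 <= a_j < N. *)
Definition Gn (R : realType) (n d : nat) (c : 'I_d -> nat) (z : 'I_d.+1 -> Cx R)
  : Cx R :=
  lim ((\sum_(a : {ffun 'I_d.+1 -> 'I_N})
          (tstarn R[i] n (Gindex c (fun j => nat_of_ord (a j))) : Cx R)
          * zmono z (fun j => nat_of_ord (a j))) @[N --> \oo]).

Definition G (R : realType) (d : nat) (c : 'I_d -> nat) (z : 'I_d.+1 -> Cx R)
  : Cx R :=
  lim ((\sum_(a : {ffun 'I_d.+1 -> 'I_N})
          tstar R (Gindex c (fun j => nat_of_ord (a j)))
          * zmono z (fun j => nat_of_ord (a j))) @[N --> \oo]).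

(* Main.v *)
Set Warnings "-all".
Require Import Defs.

From HB Require Import structures.
From mathcomp Require Import all_boot all_order all_algebra.
From mathcomp Require Import complex.
From mathcomp Require Import all_classical all_reals all_analysis.
Import Order.TTheory GRing.Theory Num.Theory.
Import numFieldNormedType.Exports.
Local Open Scope ring_scope.
Local Open Scope complex_scope.
Local Open Scope classical_set_scope.

From mathcomp Require Import lra zify ring.

Lemma tsn_cons (F : numFieldType) n s1 s :
  tstarn F n (s1 :: s) =
  \sum_(1 <= k < n.+1) ((2 * k - 1)%:R ^- s1) * tstarn F k s.
Proof. by []. Qed.

Lemma tsn_ge0 (F : numFieldType) n s : 0 <= tstarn F n s.
Proof.
elim: s n => [|s1 s IH] n /=; first exact: ler01.
apply: sumr_ge0 => k _; apply: mulr_ge0 => //.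
Qed.

Lemma tsn_mono (F : numFieldType) n m s : (n <= m)%N ->
  tstarn F n s <= tstarn F m s.
Proof.
case: s => [|s1 s] nm //=.
rewrite [X in _ <= X](big_cat_nat _ (n:=n.+1)) //=.
rewrite lerDl; apply: sumr_ge0 => k _; apply: mulr_ge0; last exact: tsn_ge0.
by [].
Qed.

Definition xk (R : realType) (k : nat) : R := ((2 * k - 1)%:R)^-1.

Lemma termE (R : realType) k s : ((2 * k - 1)%:R ^- s : R) = xk R k ^+ s.
Proof. by rewrite /xk exprVn. Qed.

Lemma xk_gt0 (R : realType) k : (1 <= k)%N -> 0 < xk R k.
Proof. by move=> hk; rewrite /xk invr_gt0 ltr0n; lia. Qed.

Lemma xk_le1 (R : realType) k : (1 <= k)%N -> xk R k <= 1.
Proof.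
move=> hk; rewrite /xk invf_le1 ?ltr0n; last by lia.
by rewrite ler1n; lia.
Qed.

Lemma xk_k (R : realType) k : (1 <= k)%N -> xk R k * k%:R <= 1.
Proof.
move=> hk; rewrite /xk mulrC ler_pdivrMr ?ltr0n; last by lia.
by rewrite mul1r ler_nat; lia.
Qed.

Definition gg (R : realType) (n : nat) : R := 2 - ((2 * n)%:R)^-1.

Lemma gg_ge1 (R : realType) n : (1 <= n)%N -> 1 <= gg R n.
Proof.
move=> hn; rewrite /gg.
have : ((2 * n)%:R : R)^-1 <= 1 by rewrite invf_le1 ?ltr0n ?ler1n; lia.
lra.
Qed.

Lemma gg_le2 (R : realType) n : (1 <= n)%N -> gg R n <= 2.
Proof.
move=> hn; rewrite /gg.
have : 0 <= ((2 * n)%:R : R)^-1 by rewrite invr_ge0.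
lra.
Qed.

Lemma gg_step (R : realType) n : (1 <= n)%N ->
  gg R n + xk R n.+1 ^+ 2 * 2 <= gg R n.+1.
Proof.
move=> hn; rewrite /gg /xk.
have -> : (2 * n.+1 - 1 = 2 * n + 1)%N by lia.
have -> : (2 * n.+1 = 2 * n + 2)%N by lia.
set r : R := n%:R.
have E1 : ((2 * n + 1)%:R : R) = 2 * r + 1 by rewrite addn1 -natr1 natrM.
have E2 : ((2 * n + 2)%:R : R) = 2 * r + 2 by rewrite natrD natrM.
have E3 : ((2 * n)%:R : R) = 2 * r by rewrite natrM.
rewrite E1 E2 E3.
have hr : 1 <= r by rewrite /r ler1n.
clearbody r.
rewrite -subr_ge0.
have -> : 2 - ((2 * r + 2)^-1) - (2 - (2 * r)^-1 + (2 * r + 1)^-1 ^+ 2 * 2)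
   = 2 / (2 * r * (2 * r + 2) * (2 * r + 1) ^+ 2).
  field.
  apply/and3P; split; apply: lt0r_neq0; clear -hr; lra.
apply: divr_ge0 => //; apply: mulr_ge0; last exact: sqr_ge0.
apply: mulr_ge0; clear -hr; lra.
Qed.

Lemma gsum (R : realType) n : (1 <= n)%N ->
  \sum_(1 <= k < n.+1) xk R k ^+ 2 * gg R k <= gg R n.
Proof.
elim: n => [//|n IH] _.
case: n IH => [|n] IH.
  rewrite big_nat1 /xk /= invr1 expr1n mul1r //.
rewrite big_nat_recr //=.
apply: le_trans (@gg_step R n.+1 _) => //.
apply: lerD; first exact: IH.
apply: ler_wpM2l; first by apply: exprn_ge0; apply: ltW; apply: xk_gt0.
exact: gg_le2.
Qed.

Lemma xk_ge0 (R : realType) k : (1 <= k)%N -> 0 <= xk R k.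
Proof. by move=> hk; apply: ltW; apply: xk_gt0. Qed.

Lemma block2 (R : realType) a rest n : (1 <= n)%N ->
  tstarn R n (nseq a 2%N ++ rest) <= gg R n * tstarn R n rest.
Proof.
elim: a n => [|a IH] n hn /=.
  apply: ler_peMl; [exact: tsn_ge0 | exact: gg_ge1].
apply: (@le_trans _ _ (\sum_(1 <= k < n.+1) (xk R k ^+ 2 * gg R k) * tstarn R n rest)).
  apply: ler_sum_nat => k /andP[hk1 hk2].
  rewrite termE -mulrA; apply: ler_wpM2l; first by apply: exprn_ge0; exact: xk_ge0.
  apply: le_trans (IH k hk1) _.
  apply: ler_wpM2l; first exact: le_trans ler01 (@gg_ge1 R _ hk1).
  by apply: (@tsn_mono R k n rest); rewrite -ltnS.
rewrite -mulr_suml; apply: ler_wpM2r; first exact: tsn_ge0.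
exact: gsum.
Qed.

Definition blocks (cs : seq (nat * nat)) : seq nat :=
  flatten [seq p.1 :: nseq p.2 2%N | p <- cs].

Lemma blocks_bound (R : realType) cs : all (fun p => 0 < p.1)%N cs ->
  forall k, (1 <= k)%N -> tstarn R k (blocks cs) <= 2 ^+ size cs * k%:R.
Proof.
elim: cs => [|[c0 a0] cs IH] /=.
  by move=> _ k hk; rewrite expr0 mul1r ler1n.
move=> /andP[hc0 hall] k hk.
rewrite /blocks /= -/(blocks cs).
apply: (@le_trans _ _ (\sum_(1 <= i < k.+1) (2 ^+ (size cs).+1 : R))).
  apply: ler_sum_nat => i /andP[hi1 hi2].
  rewrite termE.
  apply: (@le_trans _ _ (xk R i * (2 * (2 ^+ size cs * i%:R)))).
    apply: ler_pM.
    - by apply: exprn_ge0; exact: xk_ge0.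
    - exact: tsn_ge0.
    - rewrite -[X in _ <= X]expr1; apply: ler_wiXn2l => //; [exact: xk_ge0 | exact: xk_le1].
    - apply: le_trans (@block2 R _ _ _ hi1) _.
      apply: ler_pM => //; first by exact: le_trans ler01 (@gg_ge1 R _ hi1).
      + exact: tsn_ge0.
      + exact: (@gg_le2 R _ hi1).
      + exact: IH.
  rewrite exprS.
  have h1 := @xk_k R i hi1.
  have h2 : 0 <= (2:R) ^+ size cs by apply: exprn_ge0.
  move: h1 h2; set P := (2:R) ^+ size cs; set x := xk R i; set y := (i%:R : R).
  move=> h1 h2; nra.
by rewrite sumr_const_nat subn1 /= mulr_natr.
Qed.

Lemma Gindex_blocks d (c : 'I_d -> nat) a :
  Gindex c a = nseq (a ord0) 2%N ++ blocks [seq (c j, a (lift ord0 j)) | j <- enum 'I_d].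
Proof. by rewrite /Gindex /blocks -map_comp. Qed.

Lemma keyineq (R : realType) (t X y P I g : R) :
  t <= 2 * (P * I) -> y <= X * (X * X) -> 0 <= t -> 0 <= y -> 0 <= P ->
  X * I <= 1 -> 1 <= g -> 0 <= X ->
  y * t <= 2 * P * (X * X * g).
Proof.
move=> ht hy ht0 hy0 hP hXI hg hX.
have h1 : y * t <= X * (X * X) * (2 * (P * I)) by apply: ler_pM.
apply: le_trans h1 _.
have hX2 : 0 <= X * X by apply: mulr_ge0.
have hPX : 0 <= P * (X * X) by apply: mulr_ge0.
have e : X * (X * X) * (2 * (P * I)) = 2 * (P * (X * X)) * (X * I) by ring.
rewrite e.
have e2 : 2 * P * (X * X * g) = 2 * (P * (X * X)) * g by ring.
rewrite e2; nra.
Qed.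

Lemma T_bound (R : realType) (d : nat) (c : 'I_d -> nat)
  (hc : forall j : 'I_d, (0 < c j)%N /\ c j <> 2%N)
  (hc1 : forall j : 'I_d, nat_of_ord j = 0%N -> (3 <= c j)%N) n a :
  tstarn R n (Gindex c a) <= 2 ^+ d.+2.
Proof.
wlog hn : n / (1 <= n)%N.
  move=> H; case: n => [|n]; last exact: H.
  by apply: le_trans (H 1%N _); [apply: tsn_mono|].
rewrite Gindex_blocks; apply: le_trans (@block2 R _ _ _ hn) _.
apply: le_trans (ler_wpM2r (tsn_ge0 _ _ _) (@gg_le2 R _ hn)) _.
case: d c hc hc1 a => [|d] c hc hc1 a.
  rewrite enum_ord0.
  rewrite /= !exprS expr0; lra.
rewrite enum_ordSl map_cons.
set cs := [seq (c j, a (lift ord0 j)) | j <- [seq lift ord0 i | i <- enum 'I_d]].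
have hall : all (fun p => 0 < p.1)%N cs.
  by apply/allP => p /mapP[j _ ->]; exact: (hc _).1.
have hsz : size cs = d.
  rewrite /cs size_map; have := fintype.size_enum_ord d.+1; rewrite enum_ordSl /=; by case.
have h3 : (3 <= c ord0)%N by exact: hc1.
rewrite /blocks /= -/(blocks cs).
set c0 := c ord0 in h3 *.
apply: (@le_trans _ _ (2 * (2 ^+ d.+1 * \sum_(1 <= i < n.+1) (xk R i ^+ 2 * gg R i)))).
  apply: ler_wpM2l => //.
  rewrite mulr_sumr; apply: ler_sum_nat => i /andP[hi1 hi2].
  rewrite termE.
  have hx0 := @xk_ge0 R i hi1.
  have hxi := @xk_k R i hi1.
  have hg1 := @gg_ge1 R i hi1.
  have ht : tstarn R i (nseq (a (lift ord0 ord0)) 2%N ++ blocks cs) <= 2 * (2 ^+ d * i%:R).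
    apply: le_trans (@block2 R _ _ _ hi1) _.
    apply: ler_pM => //; first exact: le_trans ler01 hg1.
    + exact: tsn_ge0.
    + exact: (@gg_le2 R _ hi1).
    + by rewrite -hsz; apply: blocks_bound.
  have hxc : xk R i ^+ c0 <= xk R i ^+ 3.
    by apply: ler_wiXn2l => //; exact: xk_le1.
  have ht0 := tsn_ge0 R i (nseq (a (lift ord0 ord0)) 2%N ++ blocks cs).
  have hxc0 : 0 <= xk R i ^+ c0 by apply: exprn_ge0.
  have hP : 0 <= (2:R) ^+ d by apply: exprn_ge0.
  rewrite !exprS expr0 mulr1 in hxc *.
  exact: (@keyineq R _ _ _ _ _ _ ht hxc ht0 hxc0 hP hxi hg1 hx0).
have := @gsum R n hn.
have := @gg_le2 R n hn.
have : 0 <= (2:R) ^+ d by apply: exprn_ge0.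
rewrite !exprS; set S := \sum_(_ <= _ < _) _; set P := (2:R) ^+ d.
move=> hP hg hS.
have hS2 : S <= 2 by apply: le_trans hS hg.
nra.
Qed.

Lemma tsnC (R : realType) n s : tstarn R[i] n s = (tstarn R n s)%:C.
Proof.
elim: s n => [|s1 s IH] n /=; first by rewrite rmorph1.
rewrite rmorph_sum; apply: eq_bigr => k _.
by rewrite rmorphM IH fmorphV rmorphXn rmorph_nat.
Qed.

Lemma normcR (R : realType) (x : R) : `|x%:C| = `|x|%:C.
Proof.
by rewrite normc_def /= expr0n /= addr0 sqrtr_sqr.
Qed.

Lemma cposE (R : realType) (e : R[i]) : 0 < e -> e = (complex.Re e)%:C /\ 0 < complex.Re e.
Proof.
case: e => re im; rewrite ltcE /= => /andP[/eqP -> h]; split => //.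
Qed.

Lemma cvgC (R : realType) (v : nat -> R) (l : R) :
  v n @[n --> \oo] --> l -> ((v n)%:C : Cx R) @[n --> \oo] --> (l%:C : Cx R).
Proof.
move=> /cvgrPdist_lt H; apply/cvgrPdist_lt => e /cposE[-> he].
apply: filterS (H _ he) => n hn.
by rewrite -rmorphB normcR ltcR.
Qed.

Lemma normC_ReIm (R : realType) (z : R[i]) :
  (`|complex.Re z| <= complex.Re `|z|) /\ (`|complex.Im z| <= complex.Re `|z|).
Proof.
rewrite normc_def /=; split.
  rewrite -sqrtr_sqr ler_sqrt ?lerDl ?sqr_ge0 //.
  by apply: addr_ge0; apply: sqr_ge0.
rewrite -sqrtr_sqr ler_sqrt ?lerDr ?sqr_ge0 //.
by apply: addr_ge0; apply: sqr_ge0.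
Qed.

Lemma normC_real (R : realType) (z : R[i]) : `|z| = (complex.Re `|z|)%:C.
Proof. by rewrite normc_def. Qed.

Lemma normC_le (R : realType) (z : R[i]) (b : R) : `|z| <= b%:C ->
  `|complex.Re z| <= b /\ `|complex.Im z| <= b.
Proof.
rewrite normC_real lecR => h; have [h1 h2] := @normC_ReIm R z.
by split; apply: le_trans h.
Qed.

Lemma normC_ub (R : realType) (z : R[i]) :
  `|z| <= (`|complex.Re z| + `|complex.Im z|)%:C.
Proof.
rewrite normc_def lecR.
rewrite -[X in _ <= X]ger0_norm ?addr_ge0 // -sqrtr_sqr ler_sqrt ?sqr_ge0 //.
set a := complex.Re z; set b := complex.Im z.
have ha : `|a| ^+ 2 = a ^+ 2 by rewrite -normrX ger0_norm ?sqr_ge0.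
have hb : `|b| ^+ 2 = b ^+ 2 by rewrite -normrX ger0_norm ?sqr_ge0.
have h1 := normr_ge0 a; have h2 := normr_ge0 b.
rewrite sqrrD ha hb lerD2r lerDl.
by apply: mulrn_wge0; apply: mulr_ge0.
Qed.

Lemma ReB (R : realType) (x y : R[i]) :
  complex.Re (x - y) = complex.Re x - complex.Re y.
Proof. by case: x; case: y. Qed.

Lemma ImB (R : realType) (x y : R[i]) :
  complex.Im (x - y) = complex.Im x - complex.Im y.
Proof. by case: x; case: y. Qed.

Lemma cauchy_part (R : realType) (s : nat -> Cx R) (B : nat -> R)
  (p : R[i] -> R) :
  (forall x y, p (x - y) = p x - p y) ->
  (forall z b, `|z| <= b%:C -> `|p z| <= b) ->
  (forall N M, (N <= M)%N -> `|s M - s N| <= (B N)%:C) ->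
  (forall e : R, 0 < e -> \forall N \near \oo, B N < e) ->
  cvg ((p (s n) : R) @[n --> \oo]).
Proof.
move=> pB pN hs hB.
apply/cauchy_cvgP; apply/cauchy_exP => e he.
have [N hN] := filter_ex (hB e he).
exists (p (s N)).
apply: filterS (nbhs_infty_ge N) => M hM /=.
rewrite -ball_normE /= distrC -pB.
exact: le_lt_trans (pN _ _ (hs N M hM)) hN.
Qed.

Lemma cauchyC (R : realType) (s : nat -> Cx R) (B : nat -> R) :
  (forall N M, (N <= M)%N -> `|s M - s N| <= (B N)%:C) ->
  (forall e : R, 0 < e -> \forall N \near \oo, B N < e) ->
  cvg (s n @[n --> \oo]).
Proof.
move=> hs hB.
have hre := @cauchy_part R s B (@complex.Re R) (@ReB R)
  (fun z b h => (@normC_le R z b h).1) hs hB.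
have him := @cauchy_part R s B (@complex.Im R) (@ImB R)
  (fun z b h => (@normC_le R z b h).2) hs hB.
set l : Cx R := (lim ((complex.Re (s n) : R) @[n --> \oo])) +i*
                     (lim ((complex.Im (s n) : R) @[n --> \oo])).
suff H : s n @[n --> \oo] --> l by apply: cvgP H.
apply/cvgrPdist_lt => e /cposE[-> he].
have he2 : 0 < complex.Re e / 2 by apply: divr_gt0.
move/cvgrPdist_lt: hre => /(_ _ he2) H1.
move/cvgrPdist_lt: him => /(_ _ he2) H2.
apply: filterS (filterI H1 H2) => n [h1 h2].
have hub := @normC_ub R (l - s n).
apply: (le_lt_trans hub).
rewrite ltcR ReB ImB /=.
move: h1 h2; set a := `|_ - _|; set b := `|_ - _|; move=> h1 h2.
lra.
Qed.

Definition box {V : zmodType} (d N : nat) (h : ('I_d.+1 -> nat) -> V) : V :=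
  \sum_(a : {ffun 'I_d.+1 -> 'I_N}) h (fun j => nat_of_ord (a j)).

Lemma box_split (V : zmodType) d N M (h : ('I_d.+1 -> nat) -> V) : (N <= M)%N ->
  box d M h = box d N h +
   \sum_(a : {ffun 'I_d.+1 -> 'I_M} | ~~ [forall j, (a j < N)%N])
       h (fun j => nat_of_ord (a j)).
Proof.
move=> NM; rewrite /box (bigID (fun a : {ffun 'I_d.+1 -> 'I_M} => [forall j, (a j < N)%N])) /=.
congr (_ + _).
case: N NM => [|N] NM.
  rewrite big1; last by move=> a /forallP /(_ ord0).
  by rewrite big1 // => a _; case: (a ord0).
pose phi (b : {ffun 'I_d.+1 -> 'I_N.+1}) : {ffun 'I_d.+1 -> 'I_M} :=
  [ffun j => widen_ord NM (b j)].
rewrite (reindex phi).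
  apply: eq_big => [b|b _]; last by apply: congr1; apply: funext => j; rewrite ffunE.
  by apply/forallP => j; rewrite ffunE /=.
exists (fun a : {ffun 'I_d.+1 -> 'I_M} => [ffun j => (inord (a j) : 'I_N.+1)]).
  by move=> b _; apply/ffunP => j; rewrite !ffunE; apply/val_inj; rewrite /= inordK.
move=> a; rewrite inE => /forallP ha; apply/ffunP => j; rewrite !ffunE.
by apply/val_inj; rewrite /= inordK.
Qed.

Definition Wf {R : realType} {d : nat} (K q : R) (a : 'I_d.+1 -> nat) : R :=
  K * \prod_(j < d.+1) q ^+ (a j).

Lemma box_W (R : realType) d N (K q : R) :
  box d N (Wf K q) = K * (\sum_(i < N) q ^+ i) ^+ d.+1.
Proof.
rewrite /box /Wf -mulr_sumr; congr (K * _).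
rewrite -(bigA_distr_bigA (fun (i : 'I_d.+1) (j : 'I_N) => q ^+ j)) /=.
by rewrite prodr_const card_ord.
Qed.

Lemma geoA (R : realType) (q : R) N : q < 1 ->
  \sum_(i < N) q ^+ i = (1 - q ^+ N) / (1 - q).
Proof.
move=> hq; have h := subrX1 q N.
have e : 1 - q ^+ N = (1 - q) * \sum_(i < N) q ^+ i.
  by rewrite -opprB h -mulNr opprB.
rewrite e; field.
by apply: lt0r_neq0; rewrite subr_gt0.
Qed.

Lemma bern (R : realType) (t : R) m : 0 <= t -> t <= 1 ->
  1 - m%:R * t <= (1 - t) ^+ m.
Proof.
move=> h0 h1; elim: m => [|m IH]; first by rewrite mul0r subr0 expr0.
rewrite exprSr -natr1.
have h2 : 0 <= 1 - t by rewrite subr_ge0.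
have h3 : (1 - m%:R * t) * (1 - t) <= (1 - t) ^+ m * (1 - t) by apply: ler_wpM2r.
have h4 : 0 <= (m%:R : R) by [].
apply: le_trans h3; nra.
Qed.

Lemma W_tail (R : realType) d (K q : R) N M : 0 <= K -> 0 <= q -> q < 1 -> (N <= M)%N ->
  box d M (Wf K q) - box d N (Wf K q) <=
  K * (d.+1)%:R * q ^+ N * ((1 - q)^-1) ^+ d.+1.
Proof.
move=> hK hq0 hq1 NM.
rewrite !box_W !geoA // !exprMn.
have hD : 0 <= ((1 - q)^-1) ^+ d.+1 by apply: exprn_ge0; rewrite invr_ge0 subr_ge0 ltW.
have hqN : 0 <= q ^+ N by apply: exprn_ge0.
have hqN1 : q ^+ N <= 1 by apply: exprn_ile1 => //; apply: ltW.
have hqM : 0 <= q ^+ M by apply: exprn_ge0.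
have hqM1 : q ^+ M <= 1 by apply: exprn_ile1 => //; apply: ltW.
have hX : (1 - q ^+ M) ^+ d.+1 <= 1 by apply: exprn_ile1; rewrite ?subr_ge0 ?lerBlDr ?lerDl.
have hY := @bern R (q ^+ N) d.+1 hqN hqN1.
move: hD hX hY; set D := _ ^+ d.+1; set X := _ ^+ d.+1; set Y := _ ^+ d.+1.
set m := (d.+1)%:R; set Q := q ^+ N.
move=> hD hX hY.
have hKD : 0 <= K * D by apply: mulr_ge0.
have e : K * (X * D) - K * (Y * D) = (K * D) * (X - Y) by ring.
rewrite e.
have e2 : K * m * Q * D = (K * D) * (m * Q) by ring.
rewrite e2; apply: ler_wpM2l => //.
lra.
Qed.

Lemma box_tail (R : realType) d (K q : R) (f : ('I_d.+1 -> nat) -> Cx R) N M :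
  (forall a, `|f a| <= (Wf K q a)%:C) -> 0 <= K -> 0 <= q -> q < 1 -> (N <= M)%N ->
  `|box d M f - box d N f| <= (K * (d.+1)%:R * q ^+ N * ((1 - q)^-1) ^+ d.+1)%:C.
Proof.
move=> hf hK hq0 hq1 NM.
rewrite (@box_split _ d N M f NM) addrAC subrr add0r.
apply: le_trans (ler_norm_sum _ _ _) _.
apply: le_trans (ler_sum _ (fun a _ => hf _)) _.
rewrite -rmorph_sum lecR.
have := @box_split R d N M (Wf K q) NM.
move=> e; have e2 : \sum_(a : {ffun 'I_d.+1 -> 'I_M} | ~~ [forall j, (a j < N)%N])
    Wf K q (fun j => nat_of_ord (a j)) = box d M (Wf K q) - box d N (Wf K q).
  by rewrite e addrAC subrr add0r.
rewrite e2; exact: W_tail.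
Qed.

Lemma Bcvg (R : realType) (C q : R) : 0 <= C -> 0 <= q -> q < 1 ->
  forall e : R, 0 < e -> \forall N \near \oo, C * q ^+ N < e.
Proof.
move=> hC hq0 hq1 e he.
have hq : `|q| < 1 by rewrite ger0_norm.
have := cvg_expr hq; move/cvgrPdist_lt.
have hd : 0 < e / (C + 1) by apply: divr_gt0 => //; lra.
move=> /(_ _ hd) H; near=> N.
have : `|0 - q ^+ N| < e / (C + 1) by near: N; exact: H.
rewrite sub0r normrN ger0_norm ?exprn_ge0 // => h.
have hqN : 0 <= q ^+ N by apply: exprn_ge0.
have h2 : (C + 1) * q ^+ N < e.
  by rewrite mulrC -ltr_pdivlMr //; lra.
nra.
Unshelve. all: by end_near.
Qed.

Lemma box_cvg (R : realType) d (K q : R) (f : ('I_d.+1 -> nat) -> Cx R) :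
  (forall a, `|f a| <= (Wf K q a)%:C) -> 0 <= K -> 0 <= q -> q < 1 ->
  cvg (box d N f @[N --> \oo]).
Proof.
move=> hf hK hq0 hq1.
apply: (@cauchyC R _ (fun N => K * (d.+1)%:R * q ^+ N * ((1 - q)^-1) ^+ d.+1)).
  by move=> N M NM; apply: box_tail.
move=> e he.
have hD : 0 <= ((1 - q)^-1) ^+ d.+1 by apply: exprn_ge0; rewrite invr_ge0 subr_ge0 ltW.
have hC : 0 <= K * (d.+1)%:R * ((1 - q)^-1) ^+ d.+1 by apply: mulr_ge0 => //; apply: mulr_ge0.
have H := @Bcvg R _ _ hC hq0 hq1 _ he.
near=> N.
have : K * (d.+1)%:R * (1 - q)^-1 ^+ d.+1 * q ^+ N < e by near: N; exact: H.
by rewrite mulrAC.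
Unshelve. all: by end_near.
Qed.

Lemma tri5 (R : realType) (x1 x2 x3 x4 x5 : R[i]) (b1 b2 b3 b4 b5 : R) :
  `|x1| <= b1%:C -> `|x2| <= b2%:C -> `|x3| <= b3%:C -> `|x4| <= b4%:C ->
  `|x5| <= b5%:C ->
  `|x1 + x2 + x3 + x4 + x5| <= (b1 + b2 + b3 + b4 + b5)%:C.
Proof.
move=> h1 h2 h3 h4 h5; rewrite !rmorphD.
apply: le_trans (ler_normD _ _) _; apply: lerD => //.
apply: le_trans (ler_normD _ _) _; apply: lerD => //.
apply: le_trans (ler_normD _ _) _; apply: lerD => //.
apply: le_trans (ler_normD _ _) _; apply: lerD => //.
Qed.

Lemma zmono_bound (R : realType) d (z : 'I_d.+1 -> Cx R) (v : R) a :
  0 <= v -> (forall j, `|z j| <= v%:C) ->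
  `|zmono z a| <= (\prod_(j < d.+1) (v ^+ 2) ^+ a j)%:C.
Proof.
move=> hv hz; rewrite /zmono normr_prod rmorph_prod.
apply: ler_prod => j _; rewrite normr_ge0 /= normrX !rmorphXn -exprM.
apply: lerXn2r; rewrite ?inE ?normr_ge0 ?ler0c //.
by rewrite nnegrE ler0c.
Qed.

Lemma main_unif (R : realType) (d : nat) (c : 'I_d -> nat)
  (hc : forall j : 'I_d, (0 < c j)%N /\ c j <> 2%N)
  (hc1 : forall j : 'I_d, nat_of_ord j = 0%N -> (3 <= c j)%N)
  (u : 'I_d.+1 -> R) (hu : forall j, 0 <= u j < 1) (eps : R) (heps : 0 < eps) :
  \forall n \near \oo, forall z : 'I_d.+1 -> Cx R,
    (forall j, `|z j| <= (u j)%:C) -> `|Gn n c z - G c z| < eps%:C.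
Proof.
pose K : R := 2 ^+ d.+2.
have hK : 0 <= K by apply: exprn_ge0.
pose v : R := \big[Num.max/0]_j u j.
have huv j : u j <= v by exact: le_bigmax.
have hv0 : 0 <= v by case/andP: (hu ord0) => h _; apply: le_trans h (huv ord0).
have hv1 : v < 1 by apply: bigmax_lt => // j _; case/andP: (hu j).
pose q : R := v ^+ 2.
have hq0 : 0 <= q by apply: exprn_ge0.
have hq1 : q < 1 by rewrite /q expr2; nra.
pose T n a := tstarn R n (Gindex c a).
have Tcvg a : cvg ((T n a) @[n --> \oo]).
  apply: nondecreasing_is_cvgn; first by move=> n m nm; exact: tsn_mono.
  by exists K => _ [n _ <-]; exact: T_bound.
pose Tl a := lim ((T n a) @[n --> \oo]).
have Tle n a : T n a <= Tl a.
  by apply: nondecreasing_cvgn_le; [move=> k m km; exact: tsn_mono | exact: Tcvg].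
have TlK a : Tl a <= K.
  by apply: limr_le; [exact: Tcvg | apply: nearW => n; exact: T_bound].
have Tl0 a : 0 <= Tl a by apply: le_trans (tsn_ge0 _ _ _) (Tle 0%N a).
have tstarE a : tstar R (Gindex c a) = (Tl a)%:C.
  rewrite /tstar.
  have E : (fun n => (tstarn R[i] n (Gindex c a) : Cx R)) =
           (fun n => ((T n a)%:C : Cx R)) by apply: funext => n; rewrite tsnC.
  rewrite E; apply: cvg_lim; first exact: norm_hausdorff.
  exact: cvgC (Tcvg a).
have zb z : (forall j, `|z j| <= (u j)%:C) -> forall a,
    `|zmono z a| <= (\prod_(j < d.+1) q ^+ a j)%:C.
  move=> hz a; apply: zmono_bound => // j.
  by apply: le_trans (hz j) _; rewrite lecR.
have zb1 z : (forall j, `|z j| <= (u j)%:C) -> forall a, `|zmono z a| <= 1.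
  move=> hz a; apply: le_trans (zb z hz a) _; rewrite -(rmorph1 (real_complex R)) lecR.
  apply: prodr_ile1 => j _; rewrite exprn_ge0 //=; apply: exprn_ile1 => //; exact: ltW.
have fnb z : (forall j, `|z j| <= (u j)%:C) -> forall n a,
    `|(tstarn R[i] n (Gindex c a) : Cx R) * zmono z a| <= (Wf K q a)%:C.
  move=> hz n a; rewrite normrM tsnC normcR (ger0_norm (tsn_ge0 _ _ _)) /Wf rmorphM.
  apply: ler_pM; rewrite ?normr_ge0 ?ler0c ?tsn_ge0 //; last exact: zb.
  by rewrite lecR; exact: T_bound.
have fb z : (forall j, `|z j| <= (u j)%:C) -> forall a,
    `|tstar R (Gindex c a) * zmono z a| <= (Wf K q a)%:C.
  move=> hz a; rewrite normrM tstarE normcR (ger0_norm (Tl0 a)) /Wf rmorphM.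
  apply: ler_pM; rewrite ?normr_ge0 ?ler0c //; last exact: zb.
  by rewrite lecR.
pose D : R := ((1 - q)^-1) ^+ d.+1.
have hD : 0 <= D by apply: exprn_ge0; rewrite invr_ge0 subr_ge0 ltW.
have hC : 0 <= K * (d.+1)%:R * D by apply: mulr_ge0 => //; apply: mulr_ge0.
have he4 : 0 < eps / 4 by apply: divr_gt0.
have [N hN] := filter_ex (@Bcvg R _ _ hC hq0 hq1 _ he4).
have hBN : K * (d.+1)%:R * q ^+ N * D < eps / 4 by rewrite mulrAC.
pose cN : R := #|{ffun 'I_d.+1 -> 'I_N}|%:R.
have hcN : 0 <= cN by [].
pose dl : R := eps / (4 * (cN + 1)).
have hdl : 0 < dl by apply: divr_gt0 => //; apply: mulr_gt0 => //; lra.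
have Hall : \forall n \near \oo, forall a : {ffun 'I_d.+1 -> 'I_N},
    Tl (fun j => nat_of_ord (a j)) - T n (fun j => nat_of_ord (a j)) < dl.
  apply: filter_forall => a.
  move/cvgrPdist_lt: (Tcvg (fun j => nat_of_ord (a j))) => /(_ _ hdl) H.
  near=> n.
  have : `|Tl (fun j => nat_of_ord (a j)) - T n (fun j => nat_of_ord (a j))| < dl.
    by near: n; exact: H.
  by apply: le_lt_trans; exact: ler_norm.
near=> n.
move=> z hz.
have hMid : forall a : {ffun 'I_d.+1 -> 'I_N},
    Tl (fun j => nat_of_ord (a j)) - T n (fun j => nat_of_ord (a j)) < dl.
  by near: n; exact: Hall.
pose fn a : Cx R := (tstarn R[i] n (Gindex c a) : Cx R) * zmono z a.
pose f a : Cx R := tstar R (Gindex c a) * zmono z a.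
have eG : Gn n c z - G c z = lim (box d M fn @[M --> \oo]) - lim (box d M f @[M --> \oo]).
  by [].
rewrite eG.
have cn := @box_cvg R d K q fn (fnb z hz n) hK hq0 hq1.
have cf := @box_cvg R d K q f (fb z hz) hK hq0 hq1.
have he8 : 0 < (eps / 8)%:C :> R[i] by rewrite ltcR; apply: divr_gt0.
move/cvgrPdist_lt: cn => /(_ _ he8) Hn.
move/cvgrPdist_lt: cf => /(_ _ he8) Hf.
have [M [hMN [h1 h2]]] := filter_ex (filterI (nbhs_infty_ge N) (filterI Hn Hf)).
set Ln := lim (box d M fn @[M --> \oo]) in h1 *.
set L := lim (box d M f @[M --> \oo]) in h2 *.
have e : Ln - L = (Ln - box d M fn) + (box d M fn - box d N fn)
   + (box d N fn - box d N f) + (box d N f - box d M f) + (box d M f - L).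
  ring.
have t2 := @box_tail R d K q fn N M (fnb z hz n) hK hq0 hq1 hMN.
have t4 := @box_tail R d K q f N M (fb z hz) hK hq0 hq1 hMN.
rewrite distrC in t4.
have t5 : `|box d M f - L| <= (eps / 8)%:C by rewrite distrC; exact: ltW.
have t1 : `|Ln - box d M fn| <= (eps / 8)%:C by exact: ltW.
have t3 : `|box d N fn - box d N f| <=
    (\sum_(a : {ffun 'I_d.+1 -> 'I_N})
       (Tl (fun j => nat_of_ord (a j)) - T n (fun j => nat_of_ord (a j))))%:C.
  rewrite /box -sumrB rmorph_sum.
  apply: le_trans (ler_norm_sum _ _ _) _; apply: ler_sum => a _.
  rewrite /fn /f -mulrBl normrM tsnC tstarE -rmorphB normcR distrC.
  have hpos : 0 <= Tl (fun j => nat_of_ord (a j)) - tstarn R n (Gindex c (fun j => nat_of_ord (a j))).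
    by rewrite subr_ge0; exact: Tle.
  rewrite (ger0_norm hpos) -[X in _ <= X]mulr1.
  apply: ler_pM; rewrite ?normr_ge0 ?ler0c //; exact: zb1.
have hS : \sum_(a : {ffun 'I_d.+1 -> 'I_N})
       (Tl (fun j => nat_of_ord (a j)) - T n (fun j => nat_of_ord (a j))) < eps / 4.
  apply: (@le_lt_trans _ _ (\sum_(a : {ffun 'I_d.+1 -> 'I_N}) dl)).
    by apply: ler_sum => a _; apply: ltW.
  rewrite sumr_const -(mulr_natl dl).
  change (cN * dl < eps / 4); rewrite /dl.
  have e2 : cN * (eps / (4 * (cN + 1))) = eps / 4 - eps / (4 * (cN + 1)).
    by field; rewrite natr1 pnatr_eq0.
  rewrite e2; move: hdl; rewrite /dl => hdl'; lra.
rewrite e; apply: le_lt_trans (@tri5 R _ _ _ _ _ _ _ _ _ _ t1 t2 t3 t4 t5) _.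
have hBN' : K * (d.+1)%:R * q ^+ N * ((1 - q)^-1) ^+ d.+1 < eps / 4 := hBN.
rewrite ltcR; lra.
Unshelve. all: by end_near.
Qed.

Theorem lemma3p5 (R : realType) (d : nat) (c : 'I_d -> nat)
  (hc : forall j : 'I_d, (0 < c j)%N /\ c j <> 2%N)
  (hc1 : forall j : 'I_d, nat_of_ord j = 0%N -> (3 <= c j)%N) :
  (forall z : 'I_d.+1 -> Cx R, (forall j, `|z j| < 1) ->
     Gn n c z @[n --> \oo] --> G c z) /\
  (forall u : 'I_d.+1 -> R, (forall j, 0 <= u j < 1) ->
     forall eps : R, 0 < eps ->
       \forall n \near \oo, forall z : 'I_d.+1 -> Cx R,
         (forall j, `|z j| <= (u j)%:C) -> `|Gn n c z - G c z| < eps%:C).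
Proof.
split; last exact: main_unif.
move=> z hz.
pose u j := complex.Re `|z j|.
have hu j : 0 <= u j < 1.
  have e := @normC_real R (z j).
  have h0 := normr_ge0 (z j); have h1 := hz j.
  rewrite e ler0c in h0; rewrite e -(rmorph1 (real_complex R)) ltcR in h1.
  by rewrite h0 h1.
apply/cvgrPdist_lt => e /cposE[-> he].
have H := @main_unif R d c hc hc1 u hu _ he.
apply: filterS H => n H; rewrite distrC; apply: H => j.
by rewrite /u -normC_real.
Qed.
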